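(* Let $G$ be a finite group, acting on itself by left multiplication. There is a one-to-one correspondence between rank $3$ $G$-invariant matroid structures on $G$ and pairs $(H,\sim)$ consisting of a proper subgroup $H \subseteq G$ and a nontrivial equivalence relation $\sim$ on $G/H - \{\bar{1}\}$ satisfying: (1) if $\bar{a} \sim \bar{b}$ and $\bar{a} \neq \bar{b}$, then $\overline{a^{-1}} \sim \overline{a^{-1}b}$; (2) if $\bar{a} \sim \bar{b}$ and $h \in H$, then $\overline{ha} \sim \overline{hb}$. Furthermore, under this correspondence $H$ is the trivial group if and only if the matroid is simple.
   Context: $G/H$ denotes the set of left cosets of $H$ and $\bar{a}$ denotes the coset $aH$. A matroid on a $G$-set $X$ is $G$-invariant if for every $g \in G$ and every basis $B$, the set $gB$ is again a basis. An equivalence relation is nontrivial if it has at least two equivalence classes. A matroid is simple if every circuit has at least three elements. *)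

(* Defs.v *)
From mathcomp Require Import all_boot all_fingroup.
Set Implicit Arguments. Unset Strict Implicit. Unset Printing Implicit Defensive.
Local Open Scope group_scope.

Section Matroid.
Variable T : finType.
Implicit Types (Bs : {set {set T}}) (A B : {set T}).

Definition is_matroid_bases Bs : bool :=
  (Bs != set0) &&
  [forall B1 in Bs, forall B2 in Bs, forall x in B1 :\: B2,
     exists y in B2 :\: B1, (y |: (B1 :\ x)) \in Bs].

Definition indep Bs A : bool := [exists B in Bs, A \subset B].

Definition circuit Bs C : bool :=
  ~~ indep Bs C && [forall x in C, indep Bs (C :\ x)].

Definition has_rank Bs r : bool := [forall B in Bs, #|B| == r].

Definition simple_matroid Bs : bool := [forall C, circuit Bs C ==> (2 < #|C|)].
End Matroid.

Section Groups.
Variable gT : finGroupType.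

Definition G_invariant (Bs : {set {set gT}}) : bool :=
  [forall g : gT, forall B in Bs, (g *: B) \in Bs].

Definition rank3_inv_matroid (Bs : {set {set gT}}) : bool :=
  [&& is_matroid_bases Bs, has_rank Bs 3 & G_invariant Bs].

(* G/H - {1bar} : the left cosets of H other than H itself *)
Definition nontriv_cosets (H : {group gT}) : {set {set gT}} :=
  lcosets H [set: gT] :\ (H : {set gT}).

(* an equivalence relation on D, encoded as its graph R ⊆ D × D *)
Definition equiv_on (D : {set {set gT}}) (R : {set {set gT} * {set gT}}) : bool :=
  [&& R \subset setX D D,
      [forall a in D, (a, a) \in R],
      [forall a, forall b, ((a, b) \in R) ==> ((b, a) \in R)] &
      [forall a, forall b, forall c,
          ((a, b) \in R) && ((b, c) \in R) ==> ((a, c) \in R)]].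

Definition eq_classes (D : {set {set gT}}) (R : {set {set gT} * {set gT}}) :=
  [set [set y in D | (x, y) \in R] | x in D].

Definition nontrivial_equiv (D : {set {set gT}}) R : bool := 1 < #|eq_classes D R|.

Definition good_pair (H : {group gT}) (R : {set {set gT} * {set gT}}) : bool :=
  [&& H \proper [set: gT],
      equiv_on (nontriv_cosets H) R,
      nontrivial_equiv (nontriv_cosets H) R,
      [forall a : gT, forall b : gT,
         ((a *: H, b *: H) \in R) && (a *: H != b *: H) ==>
         ((a^-1 *: H, (a^-1 * b) *: H) \in R)] &
      [forall a : gT, forall b : gT, forall h in H,
         ((a *: H, b *: H) \in R) ==> (((h * a) *: H, (h * b) *: H) \in R)]].
End Groups.

Definition matroid_type (gT : finGroupType) :=
  {Bs : {set {set gT}} | rank3_inv_matroid Bs}.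
Definition pair_type (gT : finGroupType) :=
  {p : {group gT} * {set {set gT} * {set gT}} | good_pair p.1 p.2}.

(* Main.v *)
Require Import Defs.
From mathcomp Require Import all_boot all_fingroup.
Set Implicit Arguments. Unset Strict Implicit. Unset Printing Implicit Defensive.

Section Card3.
Variable T : finType.
Implicit Types (A B : {set T}) (x y z : T).

Lemma set3_card x y z : x != y -> y != z -> x != z -> #|[set x; y; z]| = 3.
Proof.
move=> xy yz xz; rewrite -setUA cardsU1 cards2 yz !inE.
by rewrite negb_or xy xz.
Qed.

Lemma card3_distinct x y z : #|[set x; y; z]| = 3 -> [/\ x != y, y != z & x != z].
Proof.
move=> h; split; apply/negP => /eqP e; move: h; rewrite ?e.
- by rewrite setUid cards2; case: (_ != _).
- have ->: [set x; z; z] = [set x; z] by apply/setP=> w; rewrite !inE; case: (w == x); case: (w == z).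
  by rewrite cards2; case: (_ != _).
- have ->: [set z; y; z] = [set z; y] by apply/setP=> w; rewrite !inE; case: (w == y); case: (w == z).
  by rewrite cards2; case: (_ != _).
Qed.

Lemma card3_eq B x y z : #|B| = 3 -> x \in B -> y \in B -> z \in B ->
  x != y -> y != z -> x != z -> B = [set x; y; z].
Proof.
move=> cB xB yB zB xy yz xz; apply/esym/eqP; rewrite eqEcard set3_card // cB leqnn andbT.
by apply/subsetP=> w; rewrite !inE -orbA => /or3P[]/eqP->.
Qed.

Lemma card3P B : #|B| = 3 -> exists x y z, [/\ x != y, y != z, x != z & B = [set x; y; z]].
Proof.
move=> cB; have: 0 < #|B| by rewrite cB.
case/card_gt0P=> x xB.
have: #|B :\ x| == 2 by move: cB; rewrite (cardsD1 x B) xB add1n => -[->].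
case/cards2P=> y [z [yz e]].
have yB: y \in B :\ x by rewrite e !inE eqxx.
have zB: z \in B :\ x by rewrite e !inE eqxx orbT.
move: yB zB; rewrite !inE => /andP[yx yB] /andP[zx zB].
exists x, y, z; have := @card3_eq B x y z cB xB yB zB; rewrite !(eq_sym x) yx zx yz => ->; split => //; rewrite eq_sym.
Qed.

End Card3.

Section Mat.
Variable T : finType.
Variable Bs : {set {set T}}.
Hypothesis hM : is_matroid_bases Bs.

Lemma exch B1 B2 x : B1 \in Bs -> B2 \in Bs -> x \in B1 -> x \notin B2 ->
  exists2 y, y \in B2 :\: B1 & y |: (B1 :\ x) \in Bs.
Proof.
move=> B1in B2in xB1 xB2; move: hM => /andP[_ /forall_inP/(_ B1 B1in)/forall_inP/(_ B2 B2in)].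
move/forall_inP/(_ x); rewrite inE xB1 xB2 => /(_ isT)/exists_inP[y yin yB]; by exists y.
Qed.

Lemma exch_sub B1 B2 (S : {set T}) : B1 \in Bs -> B2 \in Bs -> S \subset B1 ->
  exists2 B, B \in Bs & (S \subset B) && (B \subset B2 :|: S).
Proof.
move=> + B2in; have [n] := ubnP #|B1 :\: B2|; elim: n B1 => // n IH B1 lt B1in SB1.
case: (boolP (B1 \subset B2 :|: S)) => [sub|]; first by exists B1; rewrite ?SB1.
case/subsetPn => x xB1; rewrite inE negb_or => /andP[xB2 xS].
have [y /setDP[yB2 yB1] B1'in] := exch B1in B2in xB1 xB2.
apply: (IH _ _ B1'in).
  rewrite -ltnS; apply: leq_trans lt; rewrite ltnS; apply: proper_card; apply/properP; split.
    apply/subsetP=> w; rewrite !inE => /andP[wB2 /orP[/eqP ew|/andP[wx wB1]]]; last by rewrite wB1 wB2.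
    by rewrite ew yB2 in wB2.


  exists x; rewrite !inE ?xB1 ?xB2 ?eqxx /= ?orbF /=; last by apply: contraNneq yB1 => <-.
  done.
apply/subsetP=> w wS; rewrite !inE (subsetP SB1 _ wS) andbT; apply/orP; right.
by apply: contraNneq xS => <-.
Qed.

End Mat.

Local Open Scope group_scope.

Section GrpBasics.
Variable gT : finGroupType.
Implicit Types (g a b c x y z w : gT).

Lemma eq_mulVg g w a : (g^-1 * w == a) = (w == g * a).
Proof. by apply/eqP/eqP => [<-|->]; rewrite ?mulKVg ?mulKg. Qed.

Lemma lcoset2 g a b : g *: [set a; b] = [set g * a; g * b].
Proof. by apply/setP=> w; rewrite mem_lcoset !inE !eq_mulVg. Qed.

Lemma lcoset3 g a b c : g *: [set a; b; c] = [set g * a; g * b; g * c].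
Proof. by apply/setP=> w; rewrite mem_lcoset !inE !eq_mulVg. Qed.

Lemma set3C12 a b c : [set a; b; c] = [set b; a; c].
Proof. by apply/setP=> w; rewrite !inE; case: (w == a); case: (w == b); case: (w == c). Qed.

Lemma set3C23 a b c : [set a; b; c] = [set a; c; b].
Proof. by apply/setP=> w; rewrite !inE; case: (w == a); case: (w == b); case: (w == c). Qed.

Lemma set3_repl2 x y z y' : x != y -> y != z ->
  y' |: ([set x; y; z] :\ y) = [set x; y'; z].
Proof.
move=> xy yz; apply/setP=> w; rewrite !inE.
case: (eqVneq w y) => [->|wy] /=; last by case: (w == x); case: (w == y'); case: (w == z).
by rewrite orbF (eq_sym y x) (negbTE xy) (negbTE yz) orbF.
Qed.

Lemma classes_neq (D : {set {set gT}}) (R : {set {set gT} * {set gT}}) (x y : {set gT}) :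
  x \in D -> (x, x) \in R -> (y, x) \notin R ->
  [set z in D | (x, z) \in R] != [set z in D | (y, z) \in R].
Proof. by move=> xD xx yx; apply/negP => /eqP/setP/(_ x); rewrite !inE xD xx (negbTE yx). Qed.

End GrpBasics.

Section MtoP.
Variable gT : finGroupType.
Variable Bs : {set {set gT}}.
Hypothesis hR : rank3_inv_matroid Bs.
Implicit Types (g a b c x y z w : gT) (A B : {set gT}).

Let hM : is_matroid_bases Bs. Proof. by case/and3P: hR. Qed.

Lemma bcard B : B \in Bs -> #|B| = 3.
Proof. by case/and3P: hR => _ /forall_inP h _ /h/eqP. Qed.

Lemma binv g B : B \in Bs -> g *: B \in Bs.
Proof. by case/and3P: hR => _ _ /forallP/(_ g)/forall_inP; apply. Qed.

Lemma binvE g B : (g *: B \in Bs) = (B \in Bs).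
Proof.
apply/idP/idP; last exact: binv.
by move/(binv g^-1); rewrite lcosetK.
Qed.

Lemma bs_nonempty : exists B, B \in Bs.
Proof. by case/andP: hM => /set0Pn. Qed.

Lemma loopless x : exists2 B, B \in Bs & x \in B.
Proof.
have [B0 B0in] := bs_nonempty.
have: 0 < #|B0| by rewrite bcard.
case/card_gt0P=> b bB0; exists ((x * b^-1) *: B0); first exact: binv.
by rewrite mem_lcoset invMg invgK mulgKV.
Qed.

Lemma indepE g A : indep Bs (g *: A) = indep Bs A.
Proof.
apply/existsP/existsP => -[B /andP[Bin sub]].
  by exists (g^-1 *: B); rewrite binv // sub_lcosetV.
by exists (g *: B); rewrite binv // lcosetS.
Qed.

Lemma indep_sub A B : B \in Bs -> A \subset B -> indep Bs A.
Proof. by move=> Bin sub; apply/existsP; exists B; rewrite Bin. Qed.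

Lemma indep1 x : indep Bs [set x].
Proof. by have [B Bin xB] := loopless x; apply: (indep_sub Bin); rewrite sub1set. Qed.

Definition dep2 x y := ~~ indep Bs [set x; y].

Lemma dep2_neq x y : dep2 x y -> x != y.
Proof. by apply: contraTneq => ->; rewrite /dep2 setUid indep1. Qed.

Lemma dep2C x y : dep2 x y = dep2 y x.
Proof. by rewrite /dep2 setUC. Qed.

Lemma dep2_basis B x y : B \in Bs -> x \in B -> y \in B -> ~~ dep2 x y.
Proof.
by move=> Bin xB yB; rewrite negbK; apply: (indep_sub Bin); apply/subsetP=> w; rewrite !inE => /orP[]/eqP->.
Qed.

Lemma set3_distinct x y z : [set x; y; z] \in Bs -> [/\ x != y, y != z & x != z].
Proof. by move/bcard/card3_distinct. Qed.


Lemma PT x y z : x != z -> dep2 x y -> dep2 y z -> dep2 x z.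
Proof.
move=> xz dxy dyz; apply/negP => /existsP[B2 /andP[B2in sub]].
have [B1 B1in yB1] := loopless y.
have sy : [set y] \subset B1 by rewrite sub1set.
have [B Bin /andP[yB BB2]] := exch_sub hM B1in B2in sy.
have yB' : y \in B by rewrite -sub1set.
have xB : x \notin B by apply/negP => xB; have := dep2_basis Bin xB yB'; rewrite dxy.
have zB : z \notin B by apply/negP => zB; have := dep2_basis Bin yB' zB; rewrite dyz.
have sB : B \subset y |: (B2 :\: [set x; z]).
  apply/subsetP=> w wB; move/subsetP: BB2 => /(_ w wB); rewrite !inE.
  case: (eqVneq w y) => //= _; rewrite orbF => wB2.
  rewrite wB2 andbT negb_or; apply/andP; split; apply/eqP => ew; [move: xB|move: zB]; by rewrite -ew wB.
have := subset_leq_card sB; rewrite cardsU1 cardsDS // cards2 xz !bcard //.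
by case: (y \notin _).
Qed.

Lemma IC B a a' : B \in Bs -> a \in B -> dep2 a a' -> a' |: (B :\ a) \in Bs.
Proof.
move=> B2in aB daa.
have [B1 B1in yB1] := loopless a'.
have sy : [set a'] \subset B1 by rewrite sub1set.
have [B' Bin /andP[yB BB2]] := exch_sub hM B1in B2in sy.
have yB' : a' \in B' by rewrite -sub1set.
have aB' : a \notin B' by apply/negP => xB; have := dep2_basis Bin xB yB'; rewrite daa.
have sB : B' \subset a' |: (B :\ a).
  apply/subsetP=> w wB; move/subsetP: BB2 => /(_ w wB); rewrite !inE.
  case: (eqVneq w a') => //= _; rewrite orbF => ->; rewrite andbT.
  by apply: contraNneq aB' => <-.
suff <- : B' = a' |: (B :\ a) by [].
apply/eqP; rewrite eqEcard sB /= cardsU1 (bcard Bin).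
by move: (cardsD1 a B); rewrite aB (bcard B2in) add1n => -[<-]; case: (_ \notin _).
Qed.

Lemma LT x b a c : x != b -> indep Bs [set x; b] -> [set x; b; a] \notin Bs ->
  [set x; b; c] \notin Bs -> [set x; a; c] \notin Bs.
Proof.
move=> xb /existsP[B1 /andP[B1in sub]] na nc; apply/negP => B2in.
have [B Bin /andP[sB BB2]] := exch_sub hM B1in B2in sub.
have xB : x \in B by apply: (subsetP sB); rewrite !inE eqxx.
have bB : b \in B by apply: (subsetP sB); rewrite !inE eqxx orbT.
have : 0 < #|B :\: [set x; b]| by rewrite cardsDS // cards2 xb (bcard Bin).
case/card_gt0P=> w; rewrite !inE negb_or => /andP[/andP[wx wb] wB].
have eB := card3_eq (bcard Bin) xB bB wB xb _ _.
move/subsetP: BB2 => /(_ w wB); rewrite !inE (negbTE wx) (negbTE wb) /= orbF.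
have eB' : B = [set x; b; w] by apply: eB; rewrite eq_sym.
by case/orP => /eqP ew; [move: na|move: nc]; rewrite -ew -eB' Bin.
Qed.

Definition HM := [set g | (g == 1) || dep2 1 g].

Lemma memHM x y : (x^-1 * y \in HM) = (x == y) || dep2 x y.
Proof.
rewrite inE eq_mulVg mulg1 eq_sym; congr (_ || _).
by rewrite /dep2 -(indepE x) lcoset2 mulg1 mulKVg.
Qed.

Lemma memHM1 x : (x \in HM) = (1 == x) || dep2 1 x.
Proof. by rewrite -memHM invg1 mul1g. Qed.

Lemma HM_group : group_set HM.
Proof.
apply/group_setP; split; first by rewrite inE eqxx.
move=> x y hx hy; rewrite memHM1.
have : (x == x * y) || dep2 x (x * y) by rewrite -memHM mulKg.
rewrite memHM1 in hx.
case/orP: hx => [/eqP<-|dx]; first by rewrite mul1g -memHM1.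
case/orP => [/eqP<-|dy]; first by rewrite dx orbT.
case: (eqVneq 1 (x * y)) => //= ne; exact: PT ne dx dy.
Qed.

Definition HMg := Group HM_group.

Lemma memD a : (a *: HM \in nontriv_cosets HMg) = (a \notin HM).
Proof.
rewrite /nontriv_cosets in_setD1.
have -> : a *: HM \in lcosets HMg setT by apply/lcosetsP; exists a.
rewrite andbT; case: (boolP (a \in HM)) => h.
  by rewrite (lcoset_id (G := HMg) h) eqxx.
by apply/eqP => e; move: h; have := lcoset_refl HMg a; rewrite /= e => ->.
Qed.

Lemma DP A : A \in nontriv_cosets HMg -> exists2 a, a \notin HM & A = a *: HM.
Proof.
move=> AD; move: (AD); rewrite in_setD1 => /andP[_ /lcosetsP[a _ eA]].
by exists a => //; rewrite -memD -eA.
Qed.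

Definition RM : {set {set gT} * {set gT}} :=
  [set p | [&& p.1 \in nontriv_cosets HMg, p.2 \in nontriv_cosets HMg &
     [forall a in p.1, forall c in p.2, [set 1; a; c] \notin Bs]]].

Lemma par_swap3 x a' a c : [set x; a'; c] \in Bs -> a'^-1 * a \in HM -> [set x; a; c] \in Bs.
Proof.
move=> Bin; rewrite memHM => /orP[/eqP<-//|d].
have [d1 d2 d3] := set3_distinct Bin.
have a'in : a' \in [set x; a'; c] by rewrite !inE eqxx orbT.
by have := IC Bin a'in d; rewrite set3_repl2.
Qed.

Lemma RM_E a c : a \notin HM -> c \notin HM ->
  ((a *: HM, c *: HM) \in RM) = ([set 1; a; c] \notin Bs).
Proof.
move=> na nc; rewrite inE /= !memD na nc /=.
apply/forall_inP/idP => [h|nB a' a'in].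
  by have /forall_inP := h a (lcoset_refl HMg a); apply; exact: (lcoset_refl HMg c).
apply/forall_inP => c' c'in; apply: contra nB => B'in.
have ha : a'^-1 * a \in HM.
  by rewrite -[_ * a]invgK invMg invgK (groupV HMg) -mem_lcoset.
have hc : c'^-1 * c \in HM.
  by rewrite -[_ * c]invgK invMg invgK (groupV HMg) -mem_lcoset.
have := par_swap3 B'in ha; rewrite set3C23 => /par_swap3/(_ hc).
by rewrite set3C23.
Qed.

Lemma indepS A A' : A \subset A' -> indep Bs A' -> indep Bs A.
Proof. by move=> s /existsP[B /andP[Bin sB]]; apply: (indep_sub Bin); apply: subset_trans sB. Qed.

Lemma notin_basis B x y : B \in Bs -> x \in B -> y \in B -> x != y -> x^-1 * y \notin HM.
Proof. by move=> Bin xB yB xy; rewrite memHM negb_or xy; apply: dep2_basis Bin xB yB. Qed.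

Lemma basis_transl : exists a c, [/\ a \notin HM, c \notin HM & [set 1; a; c] \in Bs].
Proof.
have [B0 B0in] := bs_nonempty.
have [x [y [z [xy yz xz e]]]] := card3P (bcard B0in).
exists (x^-1 * y), (x^-1 * z); split.
- by apply: (notin_basis B0in) => //; rewrite e !inE eqxx ?orbT.
- by apply: (notin_basis B0in) => //; rewrite e !inE eqxx ?orbT.
by have := binv x^-1 B0in; rewrite e lcoset3 mulVg.
Qed.

Lemma RM_refl a : a \notin HM -> (a *: HM, a *: HM) \in RM.
Proof. by move=> na; rewrite RM_E //; apply/negP => /set3_distinct[_]; rewrite eqxx. Qed.

Lemma RM_D A C : (A, C) \in RM -> (A \in nontriv_cosets HMg) && (C \in nontriv_cosets HMg).
Proof. by rewrite inE /= => /and3P[-> ->]. Qed.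

Lemma good_pair_M : good_pair HMg RM.
Proof.
have [a0 [c0 [na0 nc0 B0in]]] := basis_transl.
apply/and5P; split.
- rewrite properT; apply/eqP => e; move: na0; have : a0 \in (HMg : {set gT}) by rewrite e inE.
  by move=> /= ->.

- apply/and4P; split.
  + by apply/subsetP => -[A C] /RM_D /andP[hA hC]; rewrite inE hA hC.
  + by apply/forall_inP => A /DP[a na ->]; exact: RM_refl.
  + apply/forallP => A; apply/forallP => C; apply/implyP => h.
    have /andP[/DP[a na eA] /DP[c nc eC]] := RM_D h.
    move: h; rewrite eA eC !RM_E //; by rewrite set3C23.
  + apply/forallP => A; apply/forallP => B; apply/forallP => C; apply/implyP => /andP[h1 h2].
    have /andP[/DP[a na eA] /DP[b nb eB]] := RM_D h1.
    have /andP[_ /DP[c nc eC]] := RM_D h2.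
    move: h1 h2; rewrite eA eB eC !RM_E // => h1 h2.
    have nb' := nb; rewrite memHM1 negb_or in nb'; case/andP: nb' => b1 db.
    apply: (LT b1) => //; [by move: db; rewrite /dep2 negbK | by rewrite set3C23].
- apply/card_gt1P.
  exists [set y in nontriv_cosets HMg | (a0 *: HM, y) \in RM].
  exists [set y in nontriv_cosets HMg | (c0 *: HM, y) \in RM].
  split; [apply/imsetP; exists (a0 *: HM); by rewrite ?memD | apply/imsetP; exists (c0 *: HM); by rewrite ?memD |].
  apply: classes_neq; [by rewrite memD | exact: RM_refl | by rewrite RM_E // set3C23 B0in].
- apply/forallP => a; apply/forallP => b; apply/implyP => /andP[hab ne].
  have /andP[] := RM_D hab; rewrite !memD => na nb.
  have nai : a^-1 \notin HM by rewrite (groupV HMg).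
  have nab : a^-1 * b \notin HM.
    apply: contra ne => h; apply/eqP; apply/esym/lcoset_eqP; by rewrite mem_lcoset.
  rewrite RM_E //; move: hab; rewrite RM_E //; apply: contra => Bin.
  by have := binv a Bin; rewrite lcoset3 mulg1 mulgV mulKVg set3C12.
- apply/forallP => a; apply/forallP => b; apply/forall_inP => h hH; apply/implyP => hab.
  have /andP[] := RM_D hab; rewrite !memD => na nb.
  have nha : h * a \notin HM by rewrite (groupMl _ hH).
  have nhb : h * b \notin HM by rewrite (groupMl _ hH).
  rewrite RM_E //; move: hab; rewrite RM_E //; apply: contra => Bin.
  have := binv h^-1 Bin; rewrite lcoset3 mulg1 !mulKg set3C12 => B'.
  have := par_swap3 (a := 1) B'; rewrite invgK mulg1 set3C12; apply; exact: hH.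
Qed.

Lemma simple_iff : (HM == [1 gT]) = simple_matroid Bs.
Proof.
apply/idP/idP.
  move/eqP => e; apply/forallP => C; apply/implyP => /andP[nC _].
  rewrite ltnNge; apply: contra nC => cC.
  have [B0 B0in] := bs_nonempty.
  have [->|[x xC]] := set_0Vmem C; first by apply: (indep_sub B0in); exact: sub0set.
  have [e0|[y yC]] := set_0Vmem (C :\ x).
    apply: (indepS _ (indep1 x)); apply/subsetP => w wC; rewrite inE.
    apply/negPn/negP => wx; have : w \in C :\ x by rewrite in_setD1 wx wC.
    by rewrite e0 inE.
  have e1 : C :\ x :\ y = set0.
    apply: cards0_eq; move: cC; rewrite (cardsD1 x C) xC (cardsD1 y (C :\ x)) yC.
    by rewrite add1n add1n ltnS ltnS leqn0 => /eqP.
  have xy : x != y by move: yC; rewrite in_setD1 eq_sym => /andP[].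
  have : indep Bs [set x; y].
    have : x^-1 * y \notin HM by rewrite e inE eq_mulVg mulg1 eq_sym.
    by rewrite memHM negb_or /dep2 negbK => /andP[_].
  move=> hxy; apply: (indepS _ hxy); apply/subsetP => w wC; rewrite !inE.
  case: (eqVneq w x) => //= wx; case: (eqVneq w y) => //= wy.
  have : w \in C :\ x :\ y by rewrite !in_setD1 wx wy wC.
  by rewrite e1 inE.
move=> sm; rewrite eqEsubset sub1set (group1 HMg) andbT.
apply/subsetP => h hH; rewrite inE; apply/negPn/negP => nh.
have hh := hH; rewrite memHM1 eq_sym (negbTE nh) /= in hh.
have := forallP sm [set 1; h]; rewrite cards2 (eq_sym 1) nh /= ltnn implybF => /negP; apply.
apply/andP; split => //; apply/forall_inP => w; rewrite !inE => /orP[]/eqP->.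
  apply: (indepS _ (indep1 h)); apply/subsetP => v; rewrite !inE => /andP[v1 /orP[]//]; by rewrite (negbTE v1).
apply: (indepS _ (indep1 1)); apply/subsetP => v; rewrite !inE => /andP[v1 /orP[]//]; by rewrite (negbTE v1).
Qed.

End MtoP.

Local Open Scope group_scope.

Section Cosets.
Variable gT : finGroupType.
Variable H : {group gT}.

Lemma memDH a : (a *: H \in nontriv_cosets H) = (a \notin H).
Proof.
rewrite /nontriv_cosets in_setD1.
have -> : a *: H \in lcosets H setT by apply/lcosetsP; exists a.
rewrite andbT; case: (boolP (a \in H)) => h.
  by rewrite (lcoset_id h) eqxx.
by apply/eqP => e; move: h; have := lcoset_refl H a; rewrite e => ->.
Qed.

Lemma DPH A : A \in nontriv_cosets H -> exists2 a, a \notin H & A = a *: H.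
Proof.
move=> AD; move: (AD); rewrite in_setD1 => /andP[_ /lcosetsP[a _ eA]].
by exists a => //; rewrite -memDH -eA.
Qed.

Lemma lcoset_eqE a b : (a *: H == b *: H) = (a^-1 * b \in H).
Proof.
rewrite -mem_lcoset; apply/eqP/idP => [->|/lcoset_eqP ->]; first exact: lcoset_refl.
by [].
Qed.

End Cosets.

Lemma mulVMM (gT : finGroupType) (g x y : gT) : (g * x)^-1 * (g * y) = x^-1 * y.
Proof. by rewrite invMg -mulgA mulKg. Qed.

Section PtoM.
Variable gT : finGroupType.
Variable H : {group gT}.
Variable R : {set {set gT} * {set gT}}.
Hypothesis hP : good_pair H R.
Implicit Types (g a b c x y z w : gT) (A B : {set gT}).

Let D := nontriv_cosets H.

Lemma Rsub A C : (A, C) \in R -> (A \in D) && (C \in D).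
Proof.
case/and5P: hP => _ /and4P[/subsetP s _ _ _] _ _ _ => /s.
by rewrite inE.
Qed.

Lemma Rrefl A : A \in D -> (A, A) \in R.
Proof. by case/and5P: hP => _ /and4P[_ /forall_inP r _ _] _ _ _; apply: r. Qed.

Lemma Rsym A C : (A, C) \in R -> (C, A) \in R.
Proof. by case/and5P: hP => _ /and4P[_ _ /forallP s _] _ _ _; move: (s A) => /forallP/(_ C)/implyP. Qed.

Lemma Rtrans A B C : (A, B) \in R -> (B, C) \in R -> (A, C) \in R.
Proof.
case/and5P: hP => _ /and4P[_ _ _ /forallP t] _ _ _ h1 h2.
by move: (t A) => /forallP/(_ B)/forallP/(_ C)/implyP; apply; rewrite h1 h2.
Qed.

Lemma c1 a b : (a *: H, b *: H) \in R -> a *: H != b *: H ->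
  (a^-1 *: H, (a^-1 * b) *: H) \in R.
Proof.
case/and5P: hP => _ _ _ /forallP h _ h1 h2.
by move: (h a) => /forallP/(_ b)/implyP; apply; rewrite h1 h2.
Qed.

Lemma c2 a b h : h \in H -> (a *: H, b *: H) \in R -> ((h * a) *: H, (h * b) *: H) \in R.
Proof.
case/and5P: hP => _ _ _ _ /forallP hh hH h1.
by move: (hh a) => /forallP/(_ b)/forall_inP/(_ h hH)/implyP; apply.
Qed.

Definition tri' a b := [&& a \notin H, b \notin H & (a *: H, b *: H) \notin R].
Definition tri x y z := tri' (x^-1 * y) (x^-1 * z).

Definition Bs_of : {set {set gT}} := [set B : {set gT} | (#|B| == 3) &&
  [forall x in B, forall y in B, forall z in B, [&& x != y, y != z & x != z] ==> tri x y z]].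

Lemma tri_mul g x y z : tri (g * x) (g * y) (g * z) = tri x y z.
Proof. by rewrite /tri !mulVMM. Qed.

Lemma tri_23 x y z : tri x y z -> tri x z y.
Proof. by case/and3P => h1 h2 h3; apply/and3P; split => //; apply: contra h3; apply: Rsym. Qed.

Lemma tri'_swap a b : tri' a b -> tri' a^-1 (a^-1 * b).
Proof.
case/and3P => na nb nR; apply/and3P; split.
- by rewrite groupV.
- apply: contra nR => h; have e : a *: H = b *: H by apply/eqP; rewrite lcoset_eqE.
  by rewrite -e; apply: Rrefl; rewrite /D memDH.
apply: contra nR => h; have := c1 h; rewrite invgK mulKVg; apply.
by rewrite lcoset_eqE invgK mulKVg.
Qed.

Lemma tri_12 x y z : tri x y z -> tri y x z.
Proof.
move/tri'_swap; rewrite /tri.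
have -> : (x^-1 * y)^-1 = y^-1 * x by rewrite invMg invgK.
by rewrite -mulgA mulKVg.
Qed.

Lemma tri_neq x y z : tri x y z -> [/\ x != y, y != z & x != z].
Proof.
case/and3P => h1 h2 h3; split.
- by apply: contraNneq h1 => ->; rewrite mulVg group1.
- apply: contraNneq h3 => ->; apply: Rrefl; by rewrite /D memDH.
- by apply: contraNneq h2 => ->; rewrite mulVg group1.
Qed.

Lemma mem_Bs3 x y z : tri x y z -> [set x; y; z] \in Bs_of.
Proof.
move=> t; have [xy yz xz] := tri_neq t.
rewrite inE set3_card //=.
have t1 := tri_12 t; have t2 := tri_23 t; have t3 := tri_23 t1.
have t4 := tri_12 t2; have t5 := tri_23 t4.
apply/forall_inP => x'; rewrite !inE -orbA => /or3P[]/eqP->;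
  apply/forall_inP => y'; rewrite !inE -orbA => /or3P[]/eqP->;
  apply/forall_inP => z'; rewrite !inE -orbA => /or3P[]/eqP->; rewrite ?eqxx ?andbF //= ?andbT; by apply/implyP.
Qed.

Lemma Bs3_tri B x y z : B \in Bs_of -> x \in B -> y \in B -> z \in B ->
  x != y -> y != z -> x != z -> tri x y z.
Proof.
rewrite inE => /andP[_ /forall_inP t] xB yB zB xy yz xz.
move: (t x xB) => /forall_inP/(_ y yB)/forall_inP/(_ z zB)/implyP; apply.
by rewrite xy yz xz.
Qed.

Lemma Bs_card B : B \in Bs_of -> #|B| = 3.
Proof. by rewrite inE => /andP[/eqP]. Qed.

Lemma two_unrel : exists x1 x2 : {set gT}, [/\ x1 \in D, x2 \in D & (x1, x2) \notin R].
Proof.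
case/and5P: hP => _ _ /card_gt1P[K1 [K2 [/imsetP[x1 x1D ->] /imsetP[x2 x2D ->] ne]]] _ _.
exists x1, x2; split => //; apply: contra ne => h12; apply/eqP/setP => z; rewrite !in_set.
apply/idP/idP => /andP[zl h]; rewrite zl /=; [exact: (Rtrans (Rsym h12) h) | exact: (Rtrans h12 h)].
Qed.

Lemma exists_unrel A : exists2 C : {set gT}, C \in D & (A, C) \notin R.
Proof.
have [x1 [x2 [x1D x2D n12]]] := two_unrel.
case: (boolP ((A, x1) \in R)) => h1; last by exists x1.
case: (boolP ((A, x2) \in R)) => h2; last by exists x2.
by move: n12; rewrite (Rtrans (Rsym h1) h2).
Qed.

Definition cl a w := (w \in H) || ((a *: H, w *: H) \in R).

Lemma closure_dep a y1 y2 y3 : a \notin H -> cl a y1 -> cl a y2 -> cl a y3 -> ~~ tri y1 y2 y3.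
Proof.
move=> na c1' c2' c3'; rewrite /tri /tri'.
case: (boolP (y1 \in H)) => h1.
  apply/negP => /and3P[n2 n3 nR].
  have iH : y1^-1 \in H by rewrite groupV.
  rewrite (groupMl _ iH) in n2; rewrite (groupMl _ iH) in n3.
  move: c2' c3'; rewrite /cl (negbTE n2) (negbTE n3) /= => r2 r3.
  by move: nR; rewrite (c2 iH (Rtrans (Rsym r2) r3)).
have a1 : (a *: H, y1 *: H) \in R by move: c1'; rewrite /cl (negbTE h1).
have K : forall w, cl a w -> y1^-1 * w \notin H -> (y1^-1 *: H, (y1^-1 * w) *: H) \in R.
  move=> w /orP[wH|aw] nw.
    rewrite lcosetM (lcoset_id wH); apply: Rrefl; by rewrite /D memDH groupV.
  apply: c1; first exact: Rtrans (Rsym a1) aw.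
  by rewrite lcoset_eqE.
apply/negP => /and3P[n2 n3 nR]; move: nR.
by rewrite (Rtrans (Rsym (K _ c2' n2)) (K _ c3' n3)).
Qed.

Lemma Bs_of_matroid : rank3_inv_matroid Bs_of.
Proof.
apply/and3P; split.
- apply/andP; split.
    have [x1 [x2 [x1D x2D n12]]] := two_unrel.
    have [a na ea] := DPH x1D; have [c nc ec] := DPH x2D.
    apply/set0Pn; exists [set 1; a; c]; apply: mem_Bs3.
    by rewrite /tri /tri' invg1 !mul1g na nc -ea -ec n12.
  apply/forall_inP => B1 B1in; apply/forall_inP => B2 B2in; apply/forall_inP => x.
  rewrite inE => /andP[xB2 xB1].
  have cB1 := Bs_card B1in; have cB2 := Bs_card B2in.
  have : #|B1 :\ x| == 2 by move: cB1; rewrite (cardsD1 x B1) xB1 add1n => -[->].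
  case/cards2P => u [v [uv e]].
  have : u \in B1 :\ x by rewrite e !inE eqxx.
  rewrite in_setD1 => /andP[ux uB1].
  have : v \in B1 :\ x by rewrite e !inE eqxx orbT.
  rewrite in_setD1 => /andP[vx vB1].
  have txuv : tri x u v by apply: (Bs3_tri B1in) => //; rewrite eq_sym.
  have tuv := tri_23 (tri_12 txuv).
  have na : u^-1 * v \notin H by case/and3P: tuv.
  apply: contraT => /exists_inPn hno.
  have [p [q [r [pq qr pr e2]]]] := card3P cB2.
  have tpqr : tri p q r by apply: (Bs3_tri B2in) => //; rewrite e2 !inE eqxx ?orbT.
  have clB2 : forall w, w \in B2 -> cl (u^-1 * v) (u^-1 * w).
    move=> w wB2; case: (boolP (w \in B1)) => wB1.
      have : w \in B1 :\ x by rewrite in_setD1 wB1 andbT; apply: contraNneq xB2 => <-.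
      rewrite e !inE => /orP[]/eqP->; first by rewrite /cl mulVg group1.
      by rewrite /cl Rrefl ?orbT // /D memDH.
    have := hno w; rewrite inE wB1 wB2 => /(_ isT); rewrite e.
    apply: contraR; rewrite /cl negb_or => /andP[n1 n2].
    have : tri u v w by rewrite /tri /tri' na n1 n2.
    by move/mem_Bs3; rewrite setUC.
  have hp : p \in B2 by rewrite e2 !inE eqxx.
  have hq : q \in B2 by rewrite e2 !inE eqxx orbT.
  have hr : r \in B2 by rewrite e2 !inE eqxx orbT.
  by have := closure_dep na (clB2 p hp) (clB2 q hq) (clB2 r hr); rewrite tri_mul tpqr.
- by apply/forall_inP => B /Bs_card ->.
apply/forallP => g; apply/forall_inP => B BB; rewrite inE card_lcoset Bs_card //=.
apply/forall_inP => x' x'in; apply/forall_inP => y' y'in; apply/forall_inP => z' z'in.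
apply/implyP => /and3P[n1 n2 n3]; rewrite -(tri_mul g^-1).
rewrite mem_lcoset in x'in; rewrite mem_lcoset in y'in; rewrite mem_lcoset in z'in.
by apply: (Bs3_tri BB) => //; rewrite (inj_eq (mulgI _)).
Qed.

End PtoM.

Local Open Scope group_scope.

Section FG.
Variable gT : finGroupType.
Variable H : {group gT}.
Variable R : {set {set gT} * {set gT}}.
Hypothesis hP : good_pair H R.
Variable hR : rank3_inv_matroid (Bs_of H R).

Lemma HM_of : HM (Bs_of H R) = H.
Proof.
apply/setP => g; rewrite (memHM1 hR).
case: (boolP (g \in H)) => gH.
  case: eqVneq => //= ne; apply/negP => /existsP[B /andP[Bin sub]].
  have cB := Bs_card Bin.
  have o : 1 \in B by apply: (subsetP sub); rewrite !inE eqxx.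
  have gB : g \in B by apply: (subsetP sub); rewrite !inE eqxx orbT.
  have : 0 < #|B :\: [set 1; g]| by rewrite cardsDS // cards2 ne cB.
  case/card_gt0P => z; rewrite !inE negb_or => /andP[/andP[z1 zg] zB].
  have := Bs3_tri Bin o gB zB ne; rewrite eq_sym zg eq_sym z1 => /(_ isT isT).
  by case/and3P; rewrite invg1 mul1g gH.
apply/negbTE; rewrite negb_or; apply/andP; split.
  by apply: contraNneq gH => <-; exact: group1.
have [C CD nC] := exists_unrel hP (g *: H).
have [c nc eC] := DPH CD.
have t : tri H R 1 g c by rewrite /tri /tri' invg1 !mul1g gH nc -eC nC.
rewrite /dep2 negbK; apply: (indep_sub (mem_Bs3 hP t)).
by apply/subsetP => w; rewrite !inE => /orP[]->; rewrite ?orbT.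
Qed.

Lemma HMg_of : HMg hR = H.
Proof. by apply: val_inj; rewrite /= HM_of. Qed.

Lemma RM_of : RM hR = R.
Proof.
apply/setP => -[A C]; rewrite /RM in_set /= HMg_of.
case: (boolP ((A, C) \in R)) => h.
  have /andP[AD CD] := Rsub hP h; rewrite AD CD /=.
  apply/forall_inP => a aA; apply/forall_inP => c cC; apply/negP => Bin.
  have [a0 na0 eA] := DPH AD; have [c0 nc0 eC] := DPH CD.
  have ea : a *: H = A by rewrite eA; apply/lcoset_eqP; rewrite -eA.
  have ec : c *: H = C by rewrite eC; apply/lcoset_eqP; rewrite -eC.
  have [d1 d2 d3] := card3_distinct (Bs_card Bin).
  have := Bs3_tri Bin _ _ _ d1 d2 d3; rewrite !inE !eqxx ?orbT => /(_ isT isT isT).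
  by case/and3P; rewrite invg1 !mul1g ea ec h.
apply/negP => /and3P[AD CD /forall_inP hf].
have [a na eA] := DPH AD; have [c nc eC] := DPH CD.
have := hf a; rewrite eA lcoset_refl => /(_ isT) /forall_inP /(_ c); rewrite eC lcoset_refl => /(_ isT).
have t : tri H R 1 a c by rewrite /tri /tri' invg1 !mul1g na nc -eA -eC h.
by rewrite (mem_Bs3 hP t).
Qed.

End FG.

Section GF.
Variable gT : finGroupType.
Variable Bs : {set {set gT}}.
Hypothesis hR : rank3_inv_matroid Bs.

Lemma GF : Bs_of (HMg hR) (RM hR) = Bs.
Proof.
have hP := good_pair_M hR.
apply/setP => B; apply/idP/idP => Bin.
  have [x [y [z [xy yz xz e]]]] := card3P (Bs_card Bin).
  have t : tri (HMg hR) (RM hR) x y z by apply: (Bs3_tri Bin) => //; rewrite e !inE eqxx ?orbT.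
  case/and3P: t => n1 n2; rewrite (RM_E hR n1 n2) negbK => B'.
  by have := binv hR x B'; rewrite lcoset3 mulg1 !mulKVg -e.
have cB := bcard hR Bin.
rewrite inE cB eqxx /=.
apply/forall_inP => x xB; apply/forall_inP => y yB; apply/forall_inP => z zB.
apply/implyP => /and3P[xy yz xz].
have e := card3_eq cB xB yB zB xy yz xz.
have n1 : x^-1 * y \notin HM Bs by apply: (notin_basis hR Bin).
have n2 : x^-1 * z \notin HM Bs by apply: (notin_basis hR Bin).
rewrite /tri /tri' n1 n2 (RM_E hR n1 n2) negbK /=.
by have := binv hR x^-1 Bin; rewrite e lcoset3 mulVg.
Qed.

End GF.

Local Close Scope group_scope.

Theorem corollary3p31 (gT : finGroupType) :
  exists f : matroid_type gT -> pair_type gT,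
    bijective f /\
    forall M : matroid_type gT,
      (((sval (f M)).1 : {set gT}) == [1 gT]%g) = simple_matroid (sval M).
Proof.
pose f (M : matroid_type gT) : pair_type gT :=
  exist _ (HMg (svalP M), RM (svalP M)) (good_pair_M (svalP M)).
pose g (p : pair_type gT) : matroid_type gT :=
  exist _ (Bs_of (sval p).1 (sval p).2) (Bs_of_matroid (svalP p)).
exists f; split.
  exists g.
    by move=> [Bs hR]; apply: val_inj; rewrite /= GF.
  move=> [[H R] hP]; apply: val_inj => /=.
  by rewrite HMg_of // RM_of.
by move=> [Bs hR]; rewrite /= simple_iff.
Qed.
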